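(* The function $g_1(y):=y\,\widehat\rho(y)(1-\widehat\omega(y))$ satisfies $g_1(\widehat\zeta(z))=\widehat\rho(\widehat\zeta(z))\,\big(\widehat\zeta(z)-z\widehat\zeta'(z)\big)$ for $z>0$, and $$\widehat v(y)\,g_1'(y)+g_1(y)>0\qquad\text{for all }y\in(0,y_* ).$$
   Context: LP profile: $(\widehat\rho,\widehat\omega)$ real-analytic, even, solving $\widehat\rho'=-\frac{2y\widehat\rho\widehat\omega(\widehat\rho-\widehat\omega)}{1-y^2\widehat\omega^2}$, $\widehat\omega'=\frac{1-3\widehat\omega}{y}+\frac{2y\widehat\omega^2(\widehat\rho-\widehat\omega)}{1-y^2\widehat\omega^2}$, $\widehat\omega(0)=\frac13$, $\widehat\rho(0)>\frac13$, $\widehat\omega\to1$, $y^2\widehat\rho\to\ell\in(0,\infty)$ at infinity, $\widehat\rho'<0<\widehat\omega'$ on $(0,\infty)$; $\widehat v:=y\widehat\omega$ has unique sonic point $y_*\in(2,3)$ with $\widehat v(y_* )=1$. $\widehat\zeta$: increasing solution of $z\widehat\zeta'=\widehat\zeta\,\widehat\omega(\widehat\zeta)$ with $z^{-1/3}\widehat\zeta(z)\to1$ as $z\to0$. *)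

(* Defs.v *)
From Stdlib Require Import Reals Lra.
From Coquelicot Require Import Coquelicot.
Open Scope R_scope.

Definition real_analytic (f : R -> R) : Prop :=
  forall x0 : R, exists (a : nat -> R) (r : R), 0 < r /\
    forall y, Rabs (y - x0) < r -> is_pseries a (y - x0) (f y).

(* The ODEs are required wherever their right-hand sides are defined
   (y <> 0 and 1 - y^2 omega^2 <> 0); the functions are analytic, hence
   differentiable everywhere. *)
Definition LP_profile (rho omega : R -> R) (ystar ell : R) : Prop :=
  real_analytic rho /\ real_analytic omega /\
  (forall y, rho (- y) = rho y) /\ (forall y, omega (- y) = omega y) /\
  (forall y, 1 - y ^ 2 * omega y ^ 2 <> 0 ->
     is_derive rho y
       (- (2 * y * rho y * omega y * (rho y - omega y)) / (1 - y ^ 2 * omega y ^ 2))) /\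
  (forall y, y <> 0 -> 1 - y ^ 2 * omega y ^ 2 <> 0 ->
     is_derive omega y
       ((1 - 3 * omega y) / y
        + 2 * y * omega y ^ 2 * (rho y - omega y) / (1 - y ^ 2 * omega y ^ 2))) /\
  omega 0 = 1 / 3 /\ rho 0 > 1 / 3 /\
  is_lim omega p_infty 1 /\
  0 < ell /\ is_lim (fun y => y ^ 2 * rho y) p_infty ell /\
  (forall y, 0 < y -> Derive rho y < 0 /\ 0 < Derive omega y) /\
  (* vhat := y * omega y has a unique sonic point ystar in (2,3) *)
  2 < ystar < 3 /\ ystar * omega ystar = 1 /\
  (forall y, 0 < y -> y * omega y = 1 -> y = ystar).

Definition zeta_hat (omega zeta : R -> R) : Prop :=
  (forall z1 z2, 0 < z1 -> z1 < z2 -> zeta z1 < zeta z2) /\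
  (forall z, 0 < z -> ex_derive zeta z /\
     z * Derive zeta z = zeta z * omega (zeta z)) /\
  filterlim (fun z => zeta z / Rpower z (1 / 3)) (at_right 0) (locally 1).

Definition g1 (rho omega : R -> R) (y : R) : R := y * rho y * (1 - omega y).

(* Main.v *)
Require Import Defs.
From Stdlib Require Import Reals Lra Lia Psatz.
From Coquelicot Require Import Coquelicot.
Open Scope R_scope.
Lemma radius_ge (a : nat -> R) (r : R) (f : R -> R) :
  (forall h, Rabs h < r -> is_pseries a h (f h)) ->
  forall t, 0 <= t < r -> Rbar_lt (Finite t) (CV_radius a).
Proof.
  intros H t Ht.
  destruct (Rbar_lt_dec t (CV_radius a)) as [L|L]; [exact L|].
  exfalso.
  set (t' := (t + r)/2).
  assert (Ht' : Rabs t' < r) by (unfold t'; rewrite Rabs_pos_eq; lra).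
  apply (CV_disk_outside a t').
  - rewrite Rabs_pos_eq by (unfold t'; lra).
    apply Rbar_not_lt_le in L.
    apply Rbar_le_lt_trans with t; auto. simpl. unfold t'; lra.
  - assert (E : ex_series (fun k => scal (pow_n t' k) (a k))).
    { eexists. apply (H t' Ht'). }
    apply ex_series_lim_0 in E.
    eapply is_lim_seq_ext; [|exact E].
    intros n. simpl. rewrite pow_n_pow. unfold scal; simpl. unfold mult; simpl. ring.
Qed.
Lemma ball_R (x y e : R) : ball x e y <-> Rabs (y - x) < e.
Proof. unfold ball; simpl; unfold AbsRing_ball, abs, minus, plus, opp; simpl. tauto. Qed.

Lemma analytic_props (f : R -> R) : real_analytic f -> forall x0,
  ex_derive f x0 /\ continuity_pt (Derive f) x0 /\ continuity_pt f x0.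
Proof.
  intros Ha x0. destruct (Ha x0) as [a [r [Hr H]]].
  assert (Hrad : forall h, Rabs h < r -> Rbar_lt (Rabs h) (CV_radius a)).
  { intros h Hh. apply (radius_ge a r (fun h => f (h + x0))).
    - intros k Hk. specialize (H (k + x0)). replace (k + x0 - x0) with k in H by ring. apply H.
      replace (k + x0 - x0) with k by ring. exact Hk.
    - split; [apply Rabs_pos|exact Hh]. }
  assert (Heq : forall y, Rabs (y - x0) < r -> f y = PSeries a (y - x0)).
  { intros y Hy. symmetry. apply is_pseries_unique. apply H, Hy. }
  assert (Hloc : forall y, Rabs (y - x0) < r -> locally y (fun t => f t = PSeries a (t - x0))).
  { intros y Hy. assert (Hp : 0 < r - Rabs (y - x0)) by lra.
    exists (mkposreal _ Hp). intros t Ht. simpl in Ht. pose proof (proj1 (ball_R _ _ _) Ht) as Ht2. simpl in Ht2.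
    apply Heq. pose proof (Rabs_triang (t - y) (y - x0)).
    replace (t - y + (y - x0)) with (t - x0) in H0 by ring. lra. }
  assert (Hder : forall y, Rabs (y - x0) < r ->
     is_derive f y (PSeries (PS_derive a) (y - x0))).
  { intros y Hy. apply is_derive_ext_loc with (f := fun t => PSeries a (t - x0)).
    - eapply filter_imp; [|apply (Hloc y Hy)]. intros t Ht; simpl; auto.
    - replace (PSeries (PS_derive a) (y - x0)) with
        (scal 1 (PSeries (PS_derive a) (y - x0))) by (unfold scal; simpl; unfold mult; simpl; ring).
      apply (is_derive_comp (PSeries a) (fun t => t - x0)).
      + apply is_derive_PSeries, Hrad, Hy.
      + auto_derive; [exact I | ring]. }
  assert (H0r : Rabs (x0 - x0) < r) by (replace (x0 - x0) with 0 by ring; rewrite Rabs_R0; lra).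
  assert (Hex : ex_derive f x0) by (eexists; apply Hder, H0r).
  split; [exact Hex|split].
  - apply continuity_pt_ext_loc with (f := fun y => PSeries (PS_derive a) (y - x0)).
    + assert (Hp : 0 < r) by lra. exists (mkposreal _ Hp). intros t Ht.
      pose proof (proj1 (ball_R _ _ _) Ht) as Ht2. simpl in Ht2.
      symmetry. apply is_derive_unique, Hder, Ht2.
    + apply (continuity_pt_comp (fun y => y - x0) (PSeries (PS_derive a))).
      * apply continuity_pt_minus; [apply continuity_pt_id | apply continuity_pt_const; intros u v; reflexivity].
      * apply PSeries_continuity. rewrite CV_radius_derive. apply Hrad.
        replace (x0 - x0) with 0 by ring. rewrite Rabs_R0. lra.
  - apply continuity_pt_filterlim. apply (@ex_derive_continuous R_AbsRing R_NormedModule), Hex.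
Qed.

Lemma cmul (f g : R -> R) x : continuity_pt f x -> continuity_pt g x ->
  continuity_pt (fun y => f y * g y) x.
Proof. intros; exact (continuity_pt_mult f g x H H0). Qed.
Lemma cplus (f g : R -> R) x : continuity_pt f x -> continuity_pt g x ->
  continuity_pt (fun y => f y + g y) x.
Proof. intros; exact (continuity_pt_plus f g x H H0). Qed.
Lemma cminus (f g : R -> R) x : continuity_pt f x -> continuity_pt g x ->
  continuity_pt (fun y => f y - g y) x.
Proof. intros; exact (continuity_pt_minus f g x H H0). Qed.
Lemma cconst (c x : R) : continuity_pt (fun _ => c) x.
Proof. apply continuity_pt_const; intros u v; reflexivity. Qed.
Lemma cid (x : R) : continuity_pt (fun y => y) x.
Proof. apply continuity_pt_id. Qed.

Lemma mono_incr_pos (f : R -> R) :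
  (forall x, ex_derive f x) -> (forall y, 0 < y -> 0 < Derive f y) ->
  forall x y, 0 < x -> x < y -> f x < f y.
Proof.
  intros Hd Hp x y Hx Hxy.
  destruct (MVT_gen f x y (Derive f)) as [c [Hc E]].
  - intros t _. apply Derive_correct, Hd.
  - intros t _. apply continuity_pt_filterlim.
    apply (@ex_derive_continuous R_AbsRing R_NormedModule), Hd.
  - rewrite Rmin_left in Hc by lra. rewrite Rmax_right in Hc by lra.
    assert (0 < Derive f c) by (apply Hp; lra). nra.
Qed.

Lemma mono_incr (f : R -> R) :
  (forall x, ex_derive f x) -> (forall y, 0 < y -> 0 < Derive f y) ->
  forall x y, 0 <= x -> x < y -> f x < f y.
Proof.
  intros Hd Hp x y Hx Hxy.
  destruct (Rlt_dec 0 x) as [Hx0|Hx0]; [apply mono_incr_pos; auto|].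
  assert (x = 0) by lra. subst x.
  assert (Hm : f (y/2) < f y) by (apply mono_incr_pos; auto; lra).
  cut (f 0 <= f (y/2)); [lra|].
  destruct (Rle_dec (f 0) (f (y/2))) as [L|L]; [exact L|exfalso].
  assert (Hc : continuity_pt f 0).
  { apply continuity_pt_filterlim.
    apply (@ex_derive_continuous R_AbsRing R_NormedModule), Hd. }
  pose proof (proj1 (continuity_pt_locally f 0) Hc) as Hc2.
  assert (He : 0 < f 0 - f (y/2)) by lra.
  destruct (Hc2 (mkposreal _ He)) as [d Hdd].
  set (t := Rmin (d/2) (y/4)).
  assert (Ht : 0 < t) by (unfold t; apply Rmin_glb_lt; [destruct d; simpl; lra|lra]).
  assert (Ht2 : t <= d/2) by apply Rmin_l.
  assert (Ht3 : t <= y/4) by apply Rmin_r.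
  assert (A1 : Rabs (f t - f 0) < f 0 - f (y/2)).
  { apply (Hdd t). apply ball_R. rewrite Rminus_0_r, Rabs_pos_eq by lra.
    destruct d; simpl in *; lra. }
  assert (A2 : f t < f (y/2)) by (apply mono_incr_pos; auto; lra).
  apply Rabs_def2 in A1. lra.
Qed.

Lemma mono_decr_pos (f : R -> R) :
  (forall x, ex_derive f x) -> (forall y, 0 < y -> Derive f y < 0) ->
  forall x y, 0 < x -> x < y -> f y < f x.
Proof.
  intros Hd Hp x y Hx Hxy.
  destruct (MVT_gen f x y (Derive f)) as [c [Hc E]].
  - intros t _. apply Derive_correct, Hd.
  - intros t _. apply continuity_pt_filterlim.
    apply (@ex_derive_continuous R_AbsRing R_NormedModule), Hd.
  - rewrite Rmin_left in Hc by lra. rewrite Rmax_right in Hc by lra.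
    assert (Derive f c < 0) by (apply Hp; lra). nra.
Qed.

Lemma deriv_seq (g : R -> R) (x l : R) : is_derive g x l ->
  is_lim_seq (fun n => (g (x + / INR (S n)) - g x) / / INR (S n)) l.
Proof.
  intros H. apply is_derive_Reals in H.
  apply is_lim_seq_spec. intros eps.
  destruct (H eps (cond_pos eps)) as [d Hd].
  assert (Hinv : is_lim_seq (fun n => / INR (S n)) 0).
  { apply (is_lim_seq_incr_1 (fun n => / INR n) 0).
    replace (Finite 0) with (Rbar_inv p_infty) by reflexivity.
    apply is_lim_seq_inv; [apply is_lim_seq_INR | discriminate]. }
  apply is_lim_seq_spec in Hinv. destruct (Hinv d) as [N HN].
  exists N. intros n Hn. specialize (HN n Hn).
  assert (Hpos : 0 < / INR (S n)) by (apply Rinv_0_lt_compat, lt_0_INR; lia).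
  apply Hd.
  - lra.
  - rewrite Rminus_0_r in HN. exact HN.
Qed.

Lemma cpow (f : R -> R) x n : continuity_pt f x -> continuity_pt (fun y => f y ^ n) x.
Proof.
  intros H. induction n as [|n IH]; simpl.
  - apply cconst.
  - apply cmul; auto.
Qed.

Lemma lim_uniq (u : nat -> R) (l1 l2 : R) : is_lim_seq u l1 -> is_lim_seq u l2 -> l1 = l2.
Proof.
  intros H1 H2. apply is_lim_seq_unique in H1. apply is_lim_seq_unique in H2.
  rewrite H1 in H2. injection H2. auto.
Qed.

Lemma hs_lim : is_lim_seq (fun n => / INR (S n)) 0.
Proof.
  apply (is_lim_seq_incr_1 (fun n => / INR n) 0).
  replace (Finite 0) with (Rbar_inv p_infty) by reflexivity.
  apply is_lim_seq_inv; [apply is_lim_seq_INR | discriminate].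
Qed.

Lemma hs_pos n : 0 < / INR (S n).
Proof. apply Rinv_0_lt_compat, lt_0_INR; lia. Qed.

Lemma ys_lim (s : R) : is_lim_seq (fun n => s + / INR (S n)) s.
Proof.
  replace (Finite s) with (Rbar_plus s 0) by (simpl; f_equal; ring).
  apply is_lim_seq_plus'; [apply is_lim_seq_const | apply hs_lim].
Qed.

Lemma cder (f : R -> R) x : ex_derive f x -> continuity_pt f x.
Proof. intros H. apply continuity_pt_filterlim.
  apply (@ex_derive_continuous R_AbsRing R_NormedModule), H. Qed.
Lemma copp (f : R -> R) x : continuity_pt f x -> continuity_pt (fun y => - f y) x.
Proof. intros; exact (continuity_pt_opp f x H). Qed.
Lemma cdiv (f g : R -> R) x : continuity_pt f x -> continuity_pt g x -> g x <> 0 ->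
  continuity_pt (fun y => f y / g y) x.
Proof. intros; exact (continuity_pt_div f g x H H0 H1). Qed.
Lemma Epos (t w : R) : 0 <= t <= 1 -> 1/3 <= w < 1 ->
  0 < (1 - t) * ((1 - w) * (3 - 3*w - 2*w^2 + 4*w^3)) + t * (4 * (1-w)^2 * (2*w^2 - 2*w + 1)).
Proof.
  intros Ht Hw.
  assert (C0 : 0 <= w*(w-7/10)^2) by (apply Rmult_le_pos; [lra| apply pow2_ge_0]).
  assert (C1 : 0 < 3 - 3*w - 2*w^2 + 4*w^3) by nra.
  assert (C2 : 0 < 2*w^2 - 2*w + 1) by nra.
  assert (C3 : 0 < (1 - w) * (3 - 3*w - 2*w^2 + 4*w^3)) by nra.
  assert (C4 : 0 < 4 * (1-w)^2 * (2*w^2 - 2*w + 1)) by (apply Rmult_lt_0_compat; [|lra]; assert (0<(1-w)^2) by (apply pow_lt; lra); lra).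
  set (X := (1 - w) * (3 - 3*w - 2*w^2 + 4*w^3)) in *.
  set (Y := 4 * (1-w)^2 * (2*w^2 - 2*w + 1)) in *.
  assert (0 <= t*Y) by (apply Rmult_le_pos; lra).
  destruct (Rlt_dec t 1).
  - assert (0 < (1-t)*X) by (apply Rmult_lt_0_compat; lra). lra.
  - assert (t = 1) by lra. subst t. lra.
Qed.

Lemma touch (y w r rp wp : R) : 0 < y -> 1/3 <= w < 1 -> 0 < 1 - y^2*w^2 ->
  rp = - (2*y*r*w*(r-w)) / (1 - y^2*w^2) ->
  wp = (1 - 3*w)/y + 2*y*w^2*(r-w)/(1 - y^2*w^2) ->
  2*y^2*w^2*(r-w) - (1 - w + 2*w^2)*(1 - y^2*w^2) = 0 ->
  0 < 2*(2*y*w^2 + y^2*(2*w*wp))*(r-w) + 2*y^2*w^2*(rp-wp)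
      - (-wp + 4*w*wp)*(1-y^2*w^2) + (1-w+2*w^2)*(2*y*w^2 + y^2*(2*w*wp)).
Proof.
  intros Hy Hw HD Hrp Hwp H0.
  assert (Hw0 : 0 < w) by lra.
  set (P := 1 - w + 2*w^2) in *.
  set (D := 1 - y^2*w^2) in *.
  assert (Hk : 0 < 2*y^2*w^2) by (assert (0 < y^2) by (apply pow_lt; lra); assert (0 < w^2) by (apply pow_lt; lra); nra).
  assert (Hu : r - w = P * D / (2*y^2*w^2)).
  { replace (P * D) with (2*y^2*w^2*(r-w)) by lra. field. lra. }
  assert (Hr : r = w + P * D / (2*y^2*w^2)) by lra.
  assert (Hrp2 : rp = - r * P / (y*w)).
  { rewrite Hrp, Hu. field. split; [lra|]. split; lra. }
  assert (Hwp2 : wp = (1 - 3*w + P)/y).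
  { rewrite Hwp, Hu. field. split; lra. }
  rewrite Hrp2, Hwp2, Hu. rewrite Hr.
  set (t := y^2*w^2).
  assert (Ht : 0 <= t <= 1) by (unfold t, D in *; split; nra).
  pose proof (Epos t w Ht Hw) as HE.
  apply Rmult_lt_reg_r with (r := y*w); [nra|].
  rewrite Rmult_0_l.
  eapply Rlt_le_trans; [exact HE|].
  right. unfold t, D, P. field. split; lra.
Qed.

Lemma sonic_alg (s a b : R) : 0 < s -> 0 < b ->
  a = (-(2*s*/s*/s*(a - b))) / (-(2*s*(/s)^2 + 2*s^2*/s*b)) ->
  b = (1 - 3 * /s)/s + (2*s*(/s)^2*(a - b)) / (-(2*s*(/s)^2 + 2*s^2*/s*b)) ->
  a = -1/s^2 /\ b = (s-2)/s^2.
Proof.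
  intros Hs Hb Ea Eb.
  assert (HD : -(2*s*(/s)^2 + 2*s^2*/s*b) = -(2/s + 2*s*b)) by (field; lra).
  rewrite HD in Ea, Eb.
  assert (HD0 : 0 < 2/s + 2*s*b).
  { assert (0 < 2/s) by (apply Rdiv_lt_0_compat; lra). nra. }
  assert (E1 : a * (2/s + 2*s*b) = 2/s*(a-b)).
  { rewrite Ea at 1. field. split; [lra|nra]. }
  assert (E2 : (b - (1 - 3 * /s)/s) * (2/s + 2*s*b) = -(2/s*(a-b))).
  { rewrite Eb at 1. field. split; [lra|nra]. }
  assert (E3 : (a + b - (1 - 3 * /s)/s) * (2/s + 2*s*b) = 0) by lra.
  apply Rmult_integral in E3. destruct E3 as [E3|E3]; [|lra].
  assert (E4 : b * (s^2 * a + 1) = 0).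
  { apply Rmult_eq_reg_l with (2/s); [|apply Rgt_not_eq, Rdiv_lt_0_compat; lra].
    transitivity (a * (2/s + 2*s*b) - 2/s*(a-b)); [field; lra|]. lra. }
  apply Rmult_integral in E4. destruct E4 as [E4|E4]; [lra|].
  assert (Hs2 : s^2*a = -1) by lra.
  assert (Ha : a = -1/s^2).
  { replace a with ((s^2*a)/s^2) by (field; lra). rewrite Hs2. reflexivity. }
  split; [exact Ha|].
  assert (b = (1 - 3 * /s)/s - a) by lra. rewrite H, Ha. field. lra.
Qed.

Theorem lemmaL (rho omega zeta : R -> R) (ystar ell : R) :
  LP_profile rho omega ystar ell ->
  zeta_hat omega zeta ->
  (forall z, 0 < z ->
     g1 rho omega (zeta z) = rho (zeta z) * (zeta z - z * Derive zeta z)) /\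
  (forall y, 0 < y < ystar ->
     (y * omega y) * Derive (g1 rho omega) y + g1 rho omega y > 0).
Proof.
  intros HLP HZ.
  destruct HLP as (Hra & Hwa & _ & _ & Hrd & Hwd & Hw0 & Hr0 & Hwlim & Hell & Hlim
                   & Hmono & Hs & Hsv & Huniq).
  split.
  { intros z Hz. destruct HZ as (_ & Hd & _). destruct (Hd z Hz) as [_ E].
    unfold g1. rewrite E. ring. }
  set (s := ystar) in *.
  assert (dr : forall x, ex_derive rho x) by (intros x; apply (analytic_props rho Hra x)).
  assert (dw : forall x, ex_derive omega x) by (intros x; apply (analytic_props omega Hwa x)).
  assert (cr : forall x, continuity_pt rho x) by (intros x; apply (analytic_props rho Hra x)).
  assert (cw : forall x, continuity_pt omega x) by (intros x; apply (analytic_props omega Hwa x)).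
  assert (cdr : forall x, continuity_pt (Derive rho) x) by (intros x; apply (analytic_props rho Hra x)).
  assert (cdw : forall x, continuity_pt (Derive omega) x) by (intros x; apply (analytic_props omega Hwa x)).
  assert (wincr : forall x y, 0 <= x -> x < y -> omega x < omega y).
  { apply mono_incr; auto. intros t Ht; apply (Hmono t Ht). }
  assert (rdecr : forall x y, 0 < x -> x < y -> rho y < rho x).
  { apply mono_decr_pos; auto. intros t Ht; apply (Hmono t Ht). }
  assert (wge : forall x, 0 <= x -> 1/3 <= omega x).
  { intros x Hx. destruct (Req_dec x 0) as [->|Hx0]; [lra|].
    pose proof (wincr 0 x (Rle_refl 0) ltac:(lra)). lra. }
  assert (wlt1 : forall x, 0 <= x -> omega x < 1).
  { intros x Hx. destruct (Rlt_dec (omega x) 1) as [L|L]; [exact L|exfalso].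
    pose proof (wincr x (x+1) Hx ltac:(lra)) as Hx1.
    pose proof (proj2 (is_lim_spec omega p_infty 1) Hwlim) as HL. simpl in HL.
    assert (He : 0 < omega (x+1) - 1) by lra.
    destruct (HL (mkposreal _ He)) as [M HM]. simpl in HM.
    set (t := Rmax M (x+1) + 1).
    assert (Ht1 : M < t) by (unfold t; pose proof (Rmax_l M (x+1)); lra).
    assert (Ht2 : x + 1 < t) by (unfold t; pose proof (Rmax_r M (x+1)); lra).
    specialize (HM t Ht1). pose proof (wincr (x+1) t ltac:(lra) Ht2).
    apply Rabs_def2 in HM. lra. }
  assert (rpos : forall x, 0 < x -> 0 < rho x).
  { intros x Hx.
    pose proof (proj2 (is_lim_spec _ p_infty ell) Hlim) as HL. simpl in HL.
    assert (He : 0 < ell / 2) by lra.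
    destruct (HL (mkposreal _ He)) as [M HM]. simpl in HM.
    set (t := Rmax M x + 1).
    assert (Ht1 : M < t) by (unfold t; pose proof (Rmax_l M x); lra).
    assert (Ht2 : x < t) by (unfold t; pose proof (Rmax_r M x); lra).
    specialize (HM t Ht1). apply Rabs_def2 in HM.
    assert (0 < t^2) by (apply pow_lt; lra).
    assert (0 < rho t) by nra.
    pose proof (rdecr x t Hx Ht2). lra. }
  assert (Hs0 : 0 < s) by lra.
  assert (vcont : forall t, continuity_pt (fun t => t * omega t - 1) t).
  { intros t. apply cminus; [apply cmul; [apply cid|apply cw]|apply cconst]. }
  assert (vlt1 : forall x, 0 < x < s -> x * omega x < 1).
  { intros x Hx. destruct (Rlt_dec (x * omega x) 1) as [L|L]; [exact L|exfalso].
    destruct (Req_dec (x * omega x) 1) as [E|E].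
    - pose proof (Huniq x ltac:(lra) E). lra.
    - destruct (IVT (fun t => t * omega t - 1) 0 x vcont ltac:(lra) ltac:(lra) ltac:(lra))
        as [z [Hz Ez]].
      assert (z <> 0) by (intros ->; lra).
      pose proof (Huniq z ltac:(lra) ltac:(lra)). lra. }
  assert (Dne : forall x, 0 < x -> x <> s -> 1 - x^2 * omega x^2 <> 0).
  { intros x Hx Hxs E.
    assert (0 < omega x) by (pose proof (wge x ltac:(lra)); lra).
    assert (E2 : (x*omega x - 1)*(x*omega x + 1) = 0) by (transitivity (-(1 - x^2*omega x^2)); [ring | rewrite E; ring]).
    assert (0 < x * omega x) by (apply Rmult_lt_0_compat; lra).
    assert (x * omega x = 1).
    { destruct (Rmult_integral _ _ E2); lra. } apply Hxs, Huniq; auto. }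
  assert (drf : forall x, 0 < x -> x <> s -> Derive rho x =
     - (2 * x * rho x * omega x * (rho x - omega x)) / (1 - x ^ 2 * omega x ^ 2)).
  { intros x Hx Hxs. apply is_derive_unique, Hrd, Dne; auto. }
  assert (dwf : forall x, 0 < x -> x <> s -> Derive omega x =
     (1 - 3 * omega x) / x + 2 * x * omega x ^ 2 * (rho x - omega x) / (1 - x ^ 2 * omega x ^ 2)).
  { intros x Hx Hxs. apply is_derive_unique, Hwd; [lra|apply Dne; auto]. }
  assert (Hws : omega s = / s) by (apply Rmult_eq_reg_l with s; [rewrite Hsv; field; lra|lra]).
  assert (Hws0 : 0 < omega s) by (pose proof (wge s ltac:(lra)); lra).
  assert (Hrs0 : 0 < rho s) by (apply rpos; lra).
  set (Dfun := fun x => 1 - x^2 * omega x^2).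
  set (Nfun := fun x => -(2 * x * rho x * omega x * (rho x - omega x))).
  set (Mfun := fun x => 2 * x * omega x ^ 2 * (rho x - omega x)).
  set (hs := fun n : nat => / INR (S n)).
  set (ys := fun n : nat => s + hs n).
  assert (hpos : forall n, 0 < hs n) by (intros n; apply hs_pos).
  assert (ysl : is_lim_seq ys s) by apply ys_lim.
  assert (ys0 : forall n, 0 < ys n) by (intros n; unfold ys; pose proof (hpos n); lra).
  assert (ysne : forall n, ys n <> s) by (intros n; unfold ys; pose proof (hpos n); lra).
  assert (Ds0 : Dfun s = 0) by (unfold Dfun; transitivity (1 - (s*omega s)^2); [ring| rewrite Hsv; ring]).
  assert (Dyne : forall n, Dfun (ys n) <> 0) by (intros n; apply Dne; auto).
  assert (Ns0 : Nfun s = 0).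
  { assert (L1 : is_lim_seq (fun n => Dfun (ys n) * Derive rho (ys n)) (Dfun s * Derive rho s)).
    { apply (is_lim_seq_continuous (fun x => Dfun x * Derive rho x)); [|exact ysl].
      unfold Dfun. apply cmul; [|apply cdr].
      apply cminus; [apply cconst|apply cmul; apply cpow; [apply cid|apply cw]]. }
    assert (L2 : is_lim_seq (fun n => Dfun (ys n) * Derive rho (ys n)) (Nfun s)).
    { eapply is_lim_seq_ext; [|apply (is_lim_seq_continuous Nfun ys s); [|exact ysl]].
      - intros n. rewrite (drf (ys n) (ys0 n) (ysne n)). unfold Nfun. fold (Dfun (ys n)).
        field. apply Dyne.
      - unfold Nfun. apply cder. auto_derive. repeat split; auto. }
    rewrite <- (lim_uniq _ _ _ L1 L2). rewrite Ds0. ring. }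
  assert (Hrw : rho s = omega s).
  { unfold Nfun in Ns0. assert (0 < 2 * s * rho s * omega s) by
      (repeat apply Rmult_lt_0_compat; lra).
    assert (E2 : (2 * s * rho s * omega s) * (rho s - omega s) = 0) by lra.
    destruct (Rmult_integral _ _ E2); lra. }
  assert (Ms0 : Mfun s = 0) by (unfold Mfun; rewrite Hrw; ring).
  assert (Hb : 0 < Derive omega s) by apply (Hmono s Hs0).
  assert (dN : is_derive Nfun s (-(2*s*rho s*omega s*(Derive rho s - Derive omega s)))).
  { unfold Nfun. auto_derive; [repeat split; auto|].
    change (Derive (fun x => rho x) s) with (Derive rho s).
    change (Derive (fun x => omega x) s) with (Derive omega s).
    rewrite Hrw. ring. }
  assert (dD : is_derive Dfun s (-(2*s*omega s^2 + 2*s^2*omega s*Derive omega s))).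
  { unfold Dfun. auto_derive; [repeat split; auto|].
    change (Derive (fun x => omega x) s) with (Derive omega s). simpl. ring. }
  assert (dM : is_derive Mfun s (2*s*omega s^2*(Derive rho s - Derive omega s))).
  { unfold Mfun. auto_derive; [repeat split; auto|].
    change (Derive (fun x => rho x) s) with (Derive rho s).
    change (Derive (fun x => omega x) s) with (Derive omega s).
    rewrite Hrw. simpl. ring. }
  assert (D'ne : -(2*s*omega s^2 + 2*s^2*omega s*Derive omega s) <> 0).
  { assert (0 < 2*s*omega s^2) by (assert (0 < omega s ^2) by (apply pow_lt; lra); nra).
    assert (0 < 2*s^2*omega s*Derive omega s) by
      (assert (0 < s^2) by (apply pow_lt; lra); repeat apply Rmult_lt_0_compat; lra).
    lra. }
  assert (Ea : Derive rho s = (-(2*s*rho s*omega s*(Derive rho s - Derive omega s)))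
                 / (-(2*s*omega s^2 + 2*s^2*omega s*Derive omega s))).
  { apply (lim_uniq (fun n => Derive rho (ys n))).
    - apply (is_lim_seq_continuous (Derive rho)); auto.
    - eapply is_lim_seq_ext;
        [|apply is_lim_seq_div'; [apply (deriv_seq _ _ _ dN)|apply (deriv_seq _ _ _ dD)|exact D'ne]].
      intros n. cbv beta. fold (hs n). fold (ys n).
      rewrite Ns0, Ds0, (drf (ys n) (ys0 n) (ysne n)).
      pose proof (Dyne n). pose proof (hpos n). unfold Dfun, Nfun in *.
      field. split; lra. }
  assert (Eb : Derive omega s = (1 - 3 * omega s)/s + (2*s*omega s^2*(Derive rho s - Derive omega s))
                 / (-(2*s*omega s^2 + 2*s^2*omega s*Derive omega s))).
  { apply (lim_uniq (fun n => Derive omega (ys n))).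
    - apply (is_lim_seq_continuous (Derive omega)); auto.
    - eapply is_lim_seq_ext;
        [|apply is_lim_seq_plus';
          [apply (is_lim_seq_continuous (fun x => (1 - 3 * omega x)/x)); [|exact ysl]
          |apply is_lim_seq_div'; [apply (deriv_seq _ _ _ dM)|apply (deriv_seq _ _ _ dD)|exact D'ne]]].
      + intros n. cbv beta. fold (hs n). fold (ys n).
        rewrite Ms0, Ds0, (dwf (ys n) (ys0 n) (ysne n)).
        pose proof (Dyne n). pose proof (hpos n). unfold Dfun, Mfun in *.
        pose proof (ys0 n). field. repeat split; lra.
      + apply cdiv; [apply cminus; [apply cconst|apply cmul; [apply cconst|apply cw]]|apply cid|lra]. }
  rewrite Hrw, Hws in Ea. rewrite Hws in Eb.
  destruct (sonic_alg s (Derive rho s) (Derive omega s) Hs0 Hb Ea Eb) as [Ha Hb2].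
  assert (g1d : forall x, Derive (g1 rho omega) x =
     rho x * (1 - omega x) + x * Derive rho x * (1 - omega x) - x * rho x * Derive omega x).
  { intros x. apply is_derive_unique. unfold g1. auto_derive; [repeat split; auto|].
    change (Derive (fun x => rho x) x) with (Derive rho x).
    change (Derive (fun x => omega x) x) with (Derive omega x). ring. }
  set (Qf := fun x => x * omega x * (rho x * (1 - omega x) + x * Derive rho x * (1 - omega x)
                       - x * rho x * Derive omega x) + x * rho x * (1 - omega x)).
  assert (Qcont : continuity_pt Qf s).
  { unfold Qf. repeat first [apply cplus|apply cminus|apply cmul|apply cid|apply cconst
                           |apply cw|apply cr|apply cdr|apply cdw|apply copp]. }
  assert (Qs : 0 < Qf s).
  { replace (Qf s) with ((s^2 - 2*s + 2)/s^2).
    - apply Rdiv_lt_0_compat; [nra|apply pow_lt; lra].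
    - unfold Qf. rewrite Ha, Hb2, Hrw, Hws. field. lra. }
  destruct (proj1 (continuity_pt_locally Qf s) Qcont (mkposreal _ Qs)) as [d Hd].
  assert (Qnear : forall x, s - d < x < s -> 0 < Qf x).
  { intros x Hx. assert (Hx2 : Rabs (Qf x - Qf s) < Qf s).
    { apply (Hd x). apply ball_R. rewrite Rabs_left by lra. simpl; lra. }
    apply Rabs_def2 in Hx2. simpl in Hx2. lra. }
  set (Hf := fun x => 2*x^2*omega x^2*(rho x - omega x) - (1 - omega x + 2*omega x^2)*(1 - x^2*omega x^2)).
  assert (Dpos : forall x, 0 < x < s -> 0 < 1 - x^2 * omega x^2).
  { intros x Hx. pose proof (vlt1 x Hx). assert (0 < omega x) by (pose proof (wge x ltac:(lra)); lra).
    assert (0 < x * omega x) by (apply Rmult_lt_0_compat; lra). nra. }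
  assert (QH : forall x, 0 < x < s -> (0 < Qf x <-> Hf x < 0)).
  { intros x Hx. pose proof (Dpos x Hx). pose proof (rpos x ltac:(lra)).
    assert (xs : x <> s) by lra.
    assert (E : Qf x = -(x * rho x * Hf x) / (1 - x^2 * omega x^2)).
    { unfold Qf, Hf. rewrite (drf x ltac:(lra) xs), (dwf x ltac:(lra) xs). field. split; lra. }
    rewrite E. assert (0 < x * rho x) by (apply Rmult_lt_0_compat; lra).
    split; intros K.
    - destruct (Rlt_dec (Hf x) 0) as [L|L]; [exact L|exfalso].
      assert (0 <= x * rho x * Hf x) by (apply Rmult_le_pos; lra).
      assert (-(x * rho x * Hf x) / (1 - x ^ 2 * omega x ^ 2) <= 0); [|lra].
      unfold Rdiv. apply Rmult_le_0_r; [lra|]. left; apply Rinv_0_lt_compat; lra.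
    - apply Rdiv_lt_0_compat; [|lra]. assert (x * rho x * Hf x < 0) by nra. lra. }
  assert (Hcont : forall x, continuity_pt Hf x).
  { intros x. apply cder. unfold Hf. auto_derive. repeat split; auto. }
  assert (Hder : forall x, is_derive Hf x
     (2*(2*x*omega x^2 + x^2*(2*omega x*Derive omega x))*(rho x - omega x)
      + 2*x^2*omega x^2*(Derive rho x - Derive omega x)
      - (- Derive omega x + 4*omega x*Derive omega x)*(1-x^2*omega x^2)
      + (1-omega x+2*omega x^2)*(2*x*omega x^2 + x^2*(2*omega x*Derive omega x)))).
  { intros x. unfold Hf. auto_derive; [repeat split; auto|].
    change (Derive (fun x => rho x) x) with (Derive rho x).
    change (Derive (fun x => omega x) x) with (Derive omega x). simpl. ring. }
  intros y Hy. rewrite g1d. unfold g1.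
  change (y * omega y * (rho y * (1 - omega y) + y * Derive rho y * (1 - omega y) - y * rho y * Derive omega y) + y * rho y * (1 - omega y)) with (Qf y).
  apply Rlt_gt, (proj2 (QH y Hy)).
  destruct (Rlt_dec (Hf y) 0) as [L|L]; [exact L|exfalso].
  set (S := fun x => y <= x < s /\ 0 <= Hf x).
  assert (Sb : bound S) by (exists s; intros x Hx; unfold S in Hx; lra).
  assert (Sne : exists x, S x) by (exists y; unfold S; lra).
  destruct (completeness S Sb Sne) as [m [Hub Hlub]].
  assert (Sle : forall x, S x -> x <= s - d).
  { intros x [Hx1 Hx2]. destruct (Rle_dec x (s - d)) as [L2|L2]; [exact L2|exfalso].
    assert (0 < Qf x) by (apply Qnear; lra).
    assert (Hf x < 0) by (apply (proj1 (QH x ltac:(lra))); auto). lra. }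
  assert (Hd0 : 0 < d) by (destruct d; simpl; lra).
  assert (Hm1 : m <= s - d) by (apply Hlub; intros x Hx; apply Sle, Hx).
  assert (Hm2 : y <= m) by (apply Hub; unfold S; lra).
  assert (Hfm : 0 <= Hf m).
  { destruct (Rle_dec 0 (Hf m)) as [L2|L2]; [exact L2|exfalso].
    assert (He : 0 < - Hf m) by lra.
    destruct (proj1 (continuity_pt_locally Hf m) (Hcont m) (mkposreal _ He)) as [e He2].
    assert (He0 : 0 < e) by (destruct e; simpl; lra).
    assert (Hub2 : is_upper_bound S (m - e)).
    { intros x Hx. destruct (Rle_dec x (m - e)) as [L3|L3]; [exact L3|exfalso].
      assert (x <= m) by (apply Hub, Hx).
      assert (Hx2 : Rabs (Hf x - Hf m) < - Hf m).
      { apply (He2 x). apply ball_R. rewrite Rabs_left1 by lra. lra. }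
      apply Rabs_def2 in Hx2. destruct Hx as [_ Hx]. simpl in Hx2. lra. }
    pose proof (Hlub _ Hub2). lra. }
  assert (Hex : exists t, 0 < t /\ m + t < s /\ 0 <= Hf (m + t)).
  { destruct (Rlt_dec 0 (Hf m)) as [Lp|Lp].
    - destruct (proj1 (continuity_pt_locally Hf m) (Hcont m) (mkposreal _ Lp)) as [e He2].
      assert (He0 : 0 < e) by (destruct e; simpl; lra).
      set (t := Rmin (e/2) ((s - m)/2)).
      assert (0 < t) by (unfold t; apply Rmin_glb_lt; lra).
      assert (t <= e/2) by apply Rmin_l. assert (t <= (s-m)/2) by apply Rmin_r.
      exists t. split; [lra|split; [lra|]].
      assert (Hx2 : Rabs (Hf (m+t) - Hf m) < Hf m).
      { apply (He2 (m+t)). apply ball_R. rewrite Rabs_pos_eq by lra. lra. }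
      apply Rabs_def2 in Hx2. simpl in Hx2. lra.
    - assert (H0 : Hf m = 0) by lra.
      assert (m0 : 0 < m) by lra.
      assert (Hms : m <> s) by lra.
      pose proof (wge m ltac:(lra)). pose proof (wlt1 m ltac:(lra)).
      pose proof (touch m (omega m) (rho m) (Derive rho m) (Derive omega m) m0 ltac:(lra)
        (Dpos m ltac:(lra)) (drf m m0 Hms) (dwf m m0 Hms) H0) as HT.
      pose proof (proj1 (is_derive_Reals _ _ _) (Hder m)) as HL.
      set (LL := 2 * (2 * m * omega m ^ 2 + m ^ 2 * (2 * omega m * Derive omega m)) * (rho m - omega m) +
        2 * m ^ 2 * omega m ^ 2 * (Derive rho m - Derive omega m) -
        (- Derive omega m + 4 * omega m * Derive omega m) * (1 - m ^ 2 * omega m ^ 2) +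
        (1 - omega m + 2 * omega m ^ 2) * (2 * m * omega m ^ 2 + m ^ 2 * (2 * omega m * Derive omega m))) in *.
      assert (HL2 : 0 < LL / 2) by lra.
      destruct (HL (LL/2) HL2) as [e He2].
      assert (He0 : 0 < e) by (destruct e; simpl; lra).
      set (t := Rmin (e/2) ((s - m)/2)).
      assert (0 < t) by (unfold t; apply Rmin_glb_lt; lra).
      assert (t <= e/2) by apply Rmin_l. assert (t <= (s-m)/2) by apply Rmin_r.
      exists t. split; [lra|split; [lra|]].
      assert (Hx2 : Rabs ((Hf (m+t) - Hf m)/t - LL) < LL/2).
      { apply He2; [lra|]. rewrite Rabs_pos_eq by lra. lra. }
      apply Rabs_def2 in Hx2. rewrite H0 in Hx2.
      assert (0 < Hf (m+t) / t) by lra.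
      assert (Hf (m + t) = (Hf (m+t)/t) * t) by (field; lra).
      assert (0 < Hf (m+t)/t * t) by (apply Rmult_lt_0_compat; lra). lra. }
  destruct Hex as [t [Ht1 [Ht2 Ht3]]].
  assert (S (m + t)) by (unfold S; lra).
  assert (m + t <= m) by (apply Hub; auto). lra.
Qed.
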